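(* Let $M$ be a centrally endo-AIP right $R$-module and $S=\mathrm{End}_R(M)$. If $S$ has finite right uniform dimension, then $S$ is a quasi-Baer ring.
   Context: For $N\le M$, $l_S(N)=\{\phi\in S:\phi(N)=0\}$. An ideal $I$ of $S$ is centrally s-unital if for every $a\in I$ there is $z\in I$ central in $S$ with $az=a$. $M$ is centrally endo-AIP if $l_S(N)$ is a centrally s-unital ideal of $S$ for every fully invariant submodule $N$ of $M$. $S$ has finite right uniform dimension if $S_S$ contains an essential submodule that is a direct sum of finitely many uniform submodules. A ring is quasi-Baer if the right annihilator of every ideal is generated, as a right ideal, by an idempotent. *)

(* Defs.v *)
(* A right R-module M is modelled as a left module over the
   converse ring R^c.  S = End_R(M) is represented by the predicate [End M]
   on functions M -> M, with ring operations: zero = zero map, sum = pointwise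
   sum, product phi * psi = phi \o psi (S acts on the left of M). *)
From HB Require Import structures.
From mathcomp Require Import all_boot all_order all_algebra.
Set Implicit Arguments. Unset Strict Implicit. Unset Printing Implicit Defensive.
Import GRing.Theory.
Local Open Scope ring_scope.

Section Defs.
Variables (R : pzRingType) (M : lmodType R^c).

Definition End (f : M -> M) : Prop :=
  forall (a : R^c) (x y : M), f (a *: x + y) = a *: f x + f y.

Definition zeroE : M -> M := fun _ => 0.
Definition addE (f g : M -> M) : M -> M := fun x => f x + g x.
Definition oppE (f : M -> M) : M -> M := fun x => - f x.
Definition mulE (f g : M -> M) : M -> M := fun x => f (g x).

Definition submodule (N : M -> Prop) : Prop :=
  N 0 /\ (forall x y, N x -> N y -> N (x + y)) /\
  (forall (a : R^c) x, N x -> N (a *: x)).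

Definition fully_invariant (N : M -> Prop) : Prop :=
  submodule N /\ forall phi, End phi -> forall x, N x -> N (phi x).

Definition lann (N : M -> Prop) (phi : M -> M) : Prop :=
  End phi /\ forall x, N x -> phi x = 0.

Definition rann (I : (M -> M) -> Prop) (phi : M -> M) : Prop :=
  End phi /\ forall a, I a -> mulE a phi = zeroE.

Definition addsub (I : (M -> M) -> Prop) : Prop :=
  (forall f, I f -> End f) /\ I zeroE /\
  (forall f g, I f -> I g -> I (addE f g)) /\ (forall f, I f -> I (oppE f)).

Definition right_ideal (I : (M -> M) -> Prop) : Prop :=
  addsub I /\ forall f s, I f -> End s -> I (mulE f s).

Definition ideal (I : (M -> M) -> Prop) : Prop :=
  right_ideal I /\ forall f s, I f -> End s -> I (mulE s f).

Definition central (z : M -> M) : Prop :=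
  End z /\ forall s, End s -> mulE z s = mulE s z.

Definition centrally_s_unital (I : (M -> M) -> Prop) : Prop :=
  forall a, I a -> exists z, I z /\ central z /\ mulE a z = a.

Definition centrally_endo_AIP : Prop :=
  forall N, fully_invariant N -> ideal (lann N) /\ centrally_s_unital (lann N).

Definition nonzero (I : (M -> M) -> Prop) : Prop := exists f, I f /\ f <> zeroE.

Definition uniform (U : (M -> M) -> Prop) : Prop :=
  right_ideal U /\ nonzero U /\
  forall A B, right_ideal A -> right_ideal B ->
    (forall f, A f -> U f) -> (forall f, B f -> U f) ->
    nonzero A -> nonzero B -> nonzero (fun f => A f /\ B f).

Definition essential (K : (M -> M) -> Prop) : Prop :=
  right_ideal K /\
  forall J, right_ideal J -> nonzero J -> nonzero (fun f => J f /\ K f).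

Definition sumE n (u : 'I_n -> M -> M) : M -> M := fun x => \sum_(i < n) u i x.

Definition independent n (U : 'I_n -> (M -> M) -> Prop) : Prop :=
  forall u : 'I_n -> M -> M, (forall i, U i (u i)) ->
    sumE u = zeroE -> forall i, u i = zeroE.

Definition sum_family n (U : 'I_n -> (M -> M) -> Prop) (f : M -> M) : Prop :=
  exists u : 'I_n -> M -> M, (forall i, U i (u i)) /\ f = sumE u.

Definition finite_right_uniform_dim : Prop :=
  exists n (U : 'I_n -> (M -> M) -> Prop),
    (forall i, uniform (U i)) /\ independent U /\ essential (sum_family U).

Definition quasi_Baer : Prop :=
  forall I, ideal I ->
    exists e, End e /\ mulE e e = e /\
      forall f, rann I f <-> exists s, End s /\ f = mulE e s.

End Defs.

(* Main.v *)
Require Import Defs.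
From mathcomp Require Import all_boot all_order all_algebra.
From Stdlib Require Import FunctionalExtensionality Classical IndefiniteDescription.
Set Implicit Arguments. Unset Strict Implicit. Unset Printing Implicit Defensive.
Import GRing.Theory.
Local Open Scope ring_scope.

Lemma End_D (R : pzRingType) (M : lmodType R^c) (f : M -> M) :
  End f -> forall x y, f (x + y) = f x + f y.
Proof. move=> Hf x y; by rewrite -[x in LHS](scale1r x) Hf scale1r. Qed.

Lemma End_0 (R : pzRingType) (M : lmodType R^c) (f : M -> M) :
  End f -> f 0 = 0.
Proof.
move=> Hf; have h := End_D Hf 0 0; rewrite addr0 in h.
by apply: (addrI (f 0)); rewrite -h addr0.
Qed.

Lemma End_N (R : pzRingType) (M : lmodType R^c) (f : M -> M) :
  End f -> forall x, f (- x) = - f x.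
Proof.
move=> Hf x; apply: (addrI (f x)); by rewrite -End_D // !subrr End_0.
Qed.

Lemma End_B (R : pzRingType) (M : lmodType R^c) (f : M -> M) :
  End f -> forall x y, f (x - y) = f x - f y.
Proof. by move=> Hf x y; rewrite End_D // End_N. Qed.

Lemma End_Z (R : pzRingType) (M : lmodType R^c) (f : M -> M) :
  End f -> forall a x, f (a *: x) = a *: f x.
Proof. by move=> Hf a x; rewrite -[a *: x]addr0 Hf End_0 // addr0. Qed.

Lemma End_sum (R : pzRingType) (M : lmodType R^c) (f : M -> M) n (F : 'I_n -> M) :
  End f -> f (\sum_(i < n) F i) = \sum_(i < n) f (F i).
Proof. by move=> Hf; apply: (big_morph f (End_D Hf) (End_0 Hf)). Qed.

Lemma End_zero (R : pzRingType) (M : lmodType R^c) : End (@zeroE _ M).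
Proof. by move=> a x y; rewrite /zeroE scaler0 addr0. Qed.

Lemma End_id (R : pzRingType) (M : lmodType R^c) : End (fun x : M => x).
Proof. by []. Qed.

Lemma End_add (R : pzRingType) (M : lmodType R^c) (f g : M -> M) :
  End f -> End g -> End (addE f g).
Proof.
move=> Hf Hg a x y; rewrite /addE Hf Hg scalerDr.
by rewrite addrACA.
Qed.

Lemma End_opp (R : pzRingType) (M : lmodType R^c) (f : M -> M) :
  End f -> End (oppE f).
Proof. by move=> Hf a x y; rewrite /oppE Hf opprD scalerN. Qed.

Lemma End_mul (R : pzRingType) (M : lmodType R^c) (f g : M -> M) :
  End f -> End g -> End (mulE f g).
Proof. by move=> Hf Hg a x y; rewrite /mulE Hg Hf. Qed.

Lemma central_zero (R : pzRingType) (M : lmodType R^c) : central (@zeroE _ M).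
Proof.
split; first exact: End_zero.
move=> s Hs; apply: functional_extensionality => x.
by rewrite /mulE /zeroE End_0.
Qed.
Lemma fin_su (R : pzRingType) (M : lmodType R^c) (L : (M -> M) -> Prop) :
  ideal L -> centrally_s_unital L ->
  forall (a : nat -> M -> M), (forall k, L (a k)) -> forall n,
  exists z, L z /\ central z /\ forall k, (k < n)%N -> mulE (a k) z = a k.
Proof.
move=> [[[HE [H0 [HD HN]]] Hr] Hl] Hsu a Ha; elim=> [|n [z1 [Lz1 [[Ez1 Cz1] Fz1]]]].
  by exists (@zeroE _ M); split; [exact: H0 | split; [exact: central_zero|]].
pose b := addE (a n) (oppE (mulE (a n) z1)).
have Lb : L b by apply: (HD); [|apply: (HN); apply: (Hr)]; auto.
have [z2 [Lz2 [[Ez2 Cz2] Fz2]]] := Hsu b Lb.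
have Ean : End (a n) by apply: (HE).
exists (addE (addE z1 z2) (oppE (mulE z1 z2))).
split; first by apply: (HD); [apply: (HD)|apply: (HN); apply: (Hr)].
split.
  split; first by apply: End_add; [apply: End_add|apply: End_opp; apply: End_mul].
  move=> s Hs; apply: functional_extensionality => x.
  have e1 := equal_f (Cz1 s Hs); have e2 := equal_f (Cz2 s Hs).
  rewrite /mulE /addE /oppE in e1 e2 *.
  by rewrite !(End_D Hs) (End_N Hs) -!e1 -e2.
move=> k; rewrite ltnS leq_eqVlt => /orP [/eqP ->|Hk].
  apply: functional_extensionality => x.
  have e := equal_f Fz2 x.
  rewrite /mulE /addE /oppE /b in e *.
  rewrite /addE /oppE /mulE /= in e.
  by rewrite !(End_D Ean) (End_N Ean) -addrA e addrC subrK.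
have Ek : End (a k) by apply: (HE).
apply: functional_extensionality => x.
have e := equal_f (Fz1 k Hk).
rewrite /mulE /addE /oppE in e *.
by rewrite !(End_D Ek) (End_N Ek) !e addrK.
Qed.

Lemma principal_ri (R : pzRingType) (M : lmodType R^c) (w : M -> M) :
  End w -> right_ideal (fun g => exists s, End s /\ g = mulE w s).
Proof.
move=> Ew; split; [split; [|split; [|split]]|].
- by move=> f [s [Es ->]]; apply: End_mul.
- exists (@zeroE _ M); split; first exact: End_zero.
  by apply: functional_extensionality => x; rewrite /mulE /zeroE (End_0 Ew).
- move=> f g [s1 [E1 ->]] [s2 [E2 ->]]; exists (addE s1 s2); split; first exact: End_add.
  by apply: functional_extensionality => x; rewrite /mulE /addE (End_D Ew).
- move=> f [s1 [E1 ->]]; exists (oppE s1); split; first exact: End_opp.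
  by apply: functional_extensionality => x; rewrite /mulE /oppE (End_N Ew).
- move=> f s [s1 [E1 ->]] Es; exists (mulE s1 s); split => //; exact: End_mul.
Qed.

Theorem proposition3p6 (R : pzRingType) (M : lmodType R^c) :
  centrally_endo_AIP M -> finite_right_uniform_dim M -> quasi_Baer M.
Proof.
move=> HAIP [n [U [Huni [Hind [_ Hess]]]]] I HI.
have [[[IE [I0 [ID IN]]] Ir] Il] := HI.
pose J := rann I.
pose N : M -> Prop := fun x => forall phi, End phi ->
  (forall psi, J psi -> mulE phi psi = (@zeroE _ M)) -> phi x = 0.
have HN : fully_invariant N.
  split; [split; [|split]|].
  - by move=> phi Hphi _; exact: End_0.
  - by move=> x y Hx Hy phi Hphi H; rewrite (End_D Hphi) Hx // Hy // addr0.
  - by move=> a x Hx phi Hphi H; rewrite (End_Z Hphi) Hx // scaler0.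
  - move=> phi Hphi x Hx psi Hpsi H.
    have := Hx (mulE psi phi) (End_mul Hpsi Hphi); apply.
    move=> chi [Echi Hchi].
    have Jc : J (mulE phi chi).
      split; first exact: End_mul.
      move=> a Ia; change (mulE (mulE a phi) chi = (@zeroE _ M)); apply: (Hchi); exact: Ir.
    exact: (H _ Jc).
have [HL HLsu] := HAIP N HN.
have [[[LE [L0 [LD LN]]] Lr] Ll] := HL.
have L1 : forall phi psi, lann N phi -> J psi -> mulE phi psi = (@zeroE _ M).
  move=> phi psi [Ephi Hphi] Jpsi; apply: functional_extensionality => x; apply: (Hphi).
  move=> chi Echi Hchi; exact: (equal_f (Hchi psi Jpsi) x).
have L2 : forall a, I a -> lann N a.
  move=> a Ia; split; first exact: IE.
  move=> x Hx; apply: (Hx); first exact: IE.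
  by move=> psi [_ Hpsi]; apply: (Hpsi).
have core : exists e, lann N e /\ forall y, lann N y -> mulE y e = y.
  have Ha : forall i : 'I_n, exists a, lann N a /\ U i a /\
      ((exists b, lann N b /\ U i b /\ b <> (@zeroE _ M)) -> a <> (@zeroE _ M)).
    move=> i; case: (classic (exists b, lann N b /\ U i b /\ b <> (@zeroE _ M))) => [[b [Lb [Ub nb]]]|nex].
      by exists b; split => //; split => // _.
    exists (@zeroE _ M); split; first exact L0.
    have [[[_ [U0 _]] _] _] := Huni i.
    by split => // /nex.
  pose a := fun i => proj1_sig (constructive_indefinite_description _ (Ha i)).
  have Hai : forall i, lann N (a i) /\ U i (a i) /\
      ((exists b, lann N b /\ U i b /\ b <> (@zeroE _ M)) -> a i <> (@zeroE _ M)).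
    move=> i; exact: (proj2_sig (constructive_indefinite_description _ (Ha i))).
  pose an := fun k : nat => if (insub k : option 'I_n) is Some i then a i else @zeroE _ M.
  have Lan : forall k, lann N (an k).
    by move=> k; rewrite /an; case: insub => [i|]; [case: (Hai i)|exact L0].
  have [z [Lz [[Ez Cz] Fz]]] := fin_su HL HLsu Lan n.
  have Fzi : forall i : 'I_n, mulE (a i) z = a i.
    by move=> i; have := Fz i (ltn_ord i); rewrite /an valK.
  have [e [Le [[Ee Ce] Fe]]] := HLsu z Lz.
  exists e; split => //.
  have claim : forall y t, lann N y -> End t -> mulE z t = (@zeroE _ M) -> mulE y t = (@zeroE _ M).
    move=> y t Ly Et zt; apply: (NNPP) => nz.
    have Ey : End y := LE _ Ly.
    pose w := mulE y t.
    have Ew : End w by apply: End_mul.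
    have HW := principal_ri Ew.
    have nzW : nonzero (fun g => exists s, End s /\ g = mulE w s).
      exists w; split => //; exists (fun x => x); split => //; exact: End_id.
    have [g [[[s [Es gdef]] [u [Uu gu]]] gnz]] := Hess _ HW nzW.
    have UE : forall i f, U i f -> End f.
      by move=> i f; have [[[UE0 _] _] _] := Huni i; apply: (UE0).
    have Ur : forall i f s, U i f -> End s -> U i (mulE f s).
      by move=> i f s'; have [[_ Ur0] _] := Huni i; apply: (Ur0).
    have Lg : lann N g.
      by rewrite gdef; apply: (Lr) => //; apply: (Lr).
    have zu : forall i, mulE z (u i) = (@zeroE _ M).
      apply: (Hind).
        by move=> i; rewrite (Cz _ (UE i (u i) (Uu i))); apply: (Ur).
      apply: functional_extensionality => x; rewrite /sumE /mulE.
      have gx : \sum_(i < n) u i x = g x by rewrite gu.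
      rewrite -(End_sum _ Ez) gx gdef /mulE /w /mulE.
      have c1 : z (y (t (s x))) = y (z (t (s x))) := equal_f (Cz y Ey) (t (s x)).
      have c2 : z (t (s x)) = 0 := equal_f zt (s x).
      by rewrite c1 c2 /zeroE (End_0 Ey).
    have [z' [Lz' [_ Fz']]] := HLsu g Lg.
    have uz' : forall i, u i = mulE (u i) z'.
      move=> i.
      have h : addE (u i) (oppE (mulE (u i) z')) = @zeroE _ M.
        apply: (Hind (fun i => addE (u i) (oppE (mulE (u i) z')))).
        + move=> j; have [[[_ [_ [UD UN]]] _] _] := Huni j.
          apply: (UD); first exact: Uu.
          by apply: (UN); apply: (Ur); [apply: (Uu)|apply: (LE)].
        + apply: functional_extensionality => x; rewrite /sumE /addE /oppE /mulE sumrB.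
          have g1 : \sum_(i < n) u i x = g x by rewrite gu.
          have g2 : \sum_(i < n) u i (z' x) = g (z' x) by rewrite gu.
          rewrite g1 g2.
          have := equal_f Fz' x; rewrite /mulE => ->.
          by rewrite subrr.
      apply: functional_extensionality => x.
      have := equal_f h x; rewrite /addE /oppE /zeroE /mulE => /eqP.
      by rewrite subr_eq0 => /eqP.
    have Lu : forall i, lann N (u i).
      by move=> i; rewrite uz'; apply: (Ll) => //; apply: (UE); apply: (Uu).
    have [i nzi] : exists i, u i <> (@zeroE _ M).
      apply: (NNPP) => H; apply: (gnz); rewrite gu.
      apply: functional_extensionality => x; rewrite /sumE big1 // => j _.
      have -> : u j = (@zeroE _ M) by apply: (NNPP) => h; apply: (H); exists j.
      by [].
    have [Lai [Uai nza]] := Hai i.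
    have nza' : a i <> (@zeroE _ M) by apply: (nza); exists (u i).
    have Eai : End (a i) := LE _ Lai.
    have [_ [_ Uunif]] := Huni i.
    have sA : forall f, (exists s, End s /\ f = mulE (u i) s) -> U i f.
      by move=> f [s' [Es' ->]]; apply: (Ur) => //; apply: (Uu).
    have sB : forall f, (exists s, End s /\ f = mulE (a i) s) -> U i f.
      by move=> f [s' [Es' ->]]; apply: (Ur).
    have nA : nonzero (fun f => exists s, End s /\ f = mulE (u i) s).
      by exists (u i); split => //; exists (fun x => x); split => //; exact: End_id.
    have nB : nonzero (fun f => exists s, End s /\ f = mulE (a i) s).
      by exists (a i); split => //; exists (fun x => x); split => //; exact: End_id.
    have [h [[[r [Er hr]] [r' [Er' hr']]] hnz]] :=
      Uunif _ _ (principal_ri (UE i _ (Uu i))) (principal_ri Eai) sA sB nA nB.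
    apply: (hnz); apply: functional_extensionality => x.
    have e1 : z (h x) = 0.
      by rewrite hr /mulE; exact: (equal_f (zu i) (r x)).
    have e2 : z (h x) = h x.
      have c1 : z (a i (r' x)) = a i (z (r' x)) := equal_f (Cz _ Eai) (r' x).
      have c2 : a i (z (r' x)) = a i (r' x) := equal_f (Fzi i) (r' x).
      by rewrite hr' /mulE c1 c2.
    by rewrite -e2 e1.
  move=> y Ly; have Ey : End y := LE _ Ly.
  pose t := addE (fun x => x) (oppE e).
  have Et : End t by apply: End_add; [exact: End_id|exact: End_opp].
  have zt : mulE z t = (@zeroE _ M).
    apply: functional_extensionality => x; rewrite /mulE /t /addE /oppE (End_D Ez) (End_N Ez).
    have ze : z (e x) = z x := equal_f Fe x.
    by rewrite ze subrr.
  have hyt := claim y t Ly Et zt.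
  apply: functional_extensionality => x; have h := equal_f hyt x.
  rewrite /mulE /t /addE /oppE /zeroE (End_D Ey) (End_N Ey) in h.
  by rewrite /mulE; apply/eqP; rewrite eq_sym -subr_eq0 h.
have [e [Le Fe]] := core.
have Ee := LE e Le.
exists (addE (fun x => x) (oppE e)); split.
  by apply: End_add; [exact: End_id|exact: End_opp].
split.
  apply: functional_extensionality => x; rewrite /mulE /addE /oppE.
  have ee : e (e x) = e x := equal_f (Fe e Le) x.
  by rewrite (End_D Ee) (End_N Ee) ee subrr oppr0 addr0.
move=> f; split.
  move=> [Ef Hf]; exists f; split => //.
  apply: functional_extensionality => x; rewrite /mulE /addE /oppE.
  have ef : e (f x) = 0 := equal_f (L1 e f Le (conj Ef Hf)) x.
  by rewrite ef oppr0 addr0.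
move=> [s [Es ->]]; split.
  by apply: End_mul => //; apply: End_add; [exact: End_id|exact: End_opp].
move=> a Ia; have Ea := IE a Ia.
apply: functional_extensionality => x; rewrite /mulE /addE /oppE /zeroE.
have ae : a (e (s x)) = a (s x) := equal_f (Fe a (L2 a Ia)) (s x).
by rewrite (End_D Ea) (End_N Ea) ae subrr.
Qed.
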